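(* Let $K$ be a perfect $A$-field, let $0\to M_1\to M\to M_2\to0$ be an exact sequence of dual $\mathbf t$-motives over $K$, and let $N$ be a dual $\mathbf t$-motive. Then: (i) there is an exact sequence of $\mathbb F_q[t]$-modules $$0\to\operatorname{Hom}_{\mathcal M_t^\vee}(N,M_1)\to\operatorname{Hom}_{\mathcal M_t^\vee}(N,M)\to\operatorname{Hom}_{\mathcal M_t^\vee}(N,M_2)\to\operatorname{Ext}^1_{\mathcal M_t^\vee}(N,M_1)\to\operatorname{Ext}^1_{\mathcal M_t^\vee}(N,M)\to\operatorname{Ext}^1_{\mathcal M_t^\vee}(N,M_2)\to0;$$ (ii) there is an exact sequence of $\mathbb F_q[t]$-modules $$0\to\operatorname{Hom}_{\mathcal M_t^\vee}(M_2,N)\to\operatorname{Hom}_{\mathcal M_t^\vee}(M,N)\to\operatorname{Hom}_{\mathcal M_t^\vee}(M_1,N)\to\operatorname{Ext}^1_{\mathcal M_t^\vee}(M_2,N)\to\operatorname{Ext}^1_{\mathcal M_t^\vee}(M,N)\to\operatorname{Ext}^1_{\mathcal M_t^\vee}(M_1,N)\to0.$$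
   Context: $A=\mathbb F_q[t]$; $K$ a perfect field of characteristic $p$ with $\mathbb F_q$-algebra map $\iota:A\to K$, $\theta=\iota(t)$. $K\{\sigma\}$: twisted polynomials with $\sigma x=x^{q^{-1}}\sigma$. $K[t,\sigma]$ is the ring generated by $K$, $t$, $\sigma$ with $tc=ct$, $t\sigma=\sigma t$, $\sigma c=c^{q^{-1}}\sigma$ ($c\in K$). A dual $\mathbf t$-motive is a left $K[t,\sigma]$-module that is free and finitely generated over $K\{\sigma\}$ and such that $(t-\theta)^l(H/\sigma H)=0$ for some $l\in\mathbb N$; morphisms are $K[t,\sigma]$-module homomorphisms, and $\operatorname{Hom}_{\mathcal M_t^\vee}$ denotes the $\mathbb F_q[t]$-module of morphisms. A sequence of dual $\mathbf t$-motives is exact if it is exact as a sequence of $\mathbb F_q[t]$-modules. $\operatorname{Ext}^1_{\mathcal M_t^\vee}(M_2,M_1)$ is the set of (equivalence classes of) short exact sequences $0\to M_1\to M\to M_2\to0$ of dual $\mathbf t$-motives, an $\mathbb F_q[t]$-module under Baer sum with multiplication by $a$ given by pushout along multiplication by $a$ on $M_1$. *)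

(* Defs.v *)
From HB Require Import structures.
From mathcomp Require Import all_boot all_order all_algebra.
Set Implicit Arguments. Unset Strict Implicit. Unset Printing Implicit Defensive.
Import GRing.Theory.
Local Open Scope ring_scope.

Definition perfect (K : fieldType) : Prop :=
  forall p : nat, p \in [pchar K] -> forall x : K, exists y : K, y ^+ p = x.

Section DualTMotives.
Variables (Fq : finFieldType) (K : fieldType) (iota0 : {rmorphism Fq -> K}) (theta : K).
(* K is an F_q-algebra via iota0; the A-field structure iota : F_q[t] -> K
   is the F_q-algebra map with iota(t) = theta. *)
Local Notation q := #|Fq|.

(* action of a twisted polynomial sum_j f_j sigma^j of K{sigma} on h *)
Definition sapply (V : lmodType K) (sg : V -> V) (f : {poly K}) (h : V) : V :=
  \sum_(j < size f) f`_j *: iter j sg h.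

(* A dual t-motive: a left K[t,sigma]-module (K-vector space with a K-linear
   t and a sigma with sigma c = c^(1/q) sigma, commuting with t), free and
   finitely generated over K{sigma}, with (t - theta)^l H contained in sigma H. *)
Record dtm := DTM {
  dtm_car :> lmodType K;
  dtm_t : dtm_car -> dtm_car;
  dtm_sigma : dtm_car -> dtm_car;
  dtm_t_linear : forall (c : K) (x y : dtm_car),
      dtm_t (c *: x + y) = c *: dtm_t x + dtm_t y;
  dtm_sigma_add : forall x y : dtm_car, dtm_sigma (x + y) = dtm_sigma x + dtm_sigma y;
  dtm_sigma_semilinear : forall (c : K) (x : dtm_car),
      dtm_sigma ((c ^+ q) *: x) = c *: dtm_sigma x;
  dtm_t_sigma : forall x : dtm_car, dtm_t (dtm_sigma x) = dtm_sigma (dtm_t x);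
  dtm_free : exists (n : nat) (e : 'I_n -> dtm_car),
      bijective (fun f : {ffun 'I_n -> {poly K}} =>
                   \sum_(i < n) sapply dtm_sigma (f i) (e i));
  dtm_nilp : exists l : nat, forall h : dtm_car, exists h' : dtm_car,
      iter l (fun x => dtm_t x - theta *: x) h = dtm_sigma h'
}.

Definition is_morph (M N : dtm) (f : M -> N) : Prop :=
  [/\ forall (c : K) (x y : M), f (c *: x + y) = c *: f x + f y,
      forall x : M, f (dtm_t x) = dtm_t (f x) &
      forall x : M, f (dtm_sigma x) = dtm_sigma (f x)].

Definition tact (a : {poly Fq}) (M : dtm) (x : M) : M :=
  \sum_(i < size a) iota0 a`_i *: iter i (@dtm_t M) x.

Definition hom_add (M N : dtm) (f g : M -> N) : M -> N := fun x => f x + g x.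
Definition hom_scale (a : {poly Fq}) (M N : dtm) (f : M -> N) : M -> N :=
  fun x => tact a (f x).

(* short exact sequences 0 -> M -> E -> N -> 0 (extensions of N by M) *)
Record ext (N M : dtm) := Ext {
  ext_mid : dtm;
  ext_i : M -> ext_mid;
  ext_p : ext_mid -> N;
  ext_i_morph : is_morph ext_i;
  ext_p_morph : is_morph ext_p;
  ext_i_inj : injective ext_i;
  ext_p_surj : forall y : N, exists x : ext_mid, ext_p x = y;
  ext_exact : forall x : ext_mid, ext_p x = 0 <-> exists m : M, x = ext_i m
}.
Arguments ext_mid {N M} e.
Arguments ext_i {N M} e _.
Arguments ext_p {N M} e _.

Definition ext_equiv (N M : dtm) (e e' : ext N M) : Prop :=
  exists phi : ext_mid e -> ext_mid e',
    [/\ is_morph phi, forall m, phi (ext_i e m) = ext_i e' m &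
        forall x, ext_p e' (phi x) = ext_p e x].

(* Ext^1(N, M): elements are equivalence classes, represented as predicates *)
Definition Ext1 (N M : dtm) := ext N M -> Prop.

Definition is_class (N M : dtm) (C : Ext1 N M) : Prop :=
  exists e : ext N M, forall e', C e' <-> ext_equiv e e'.

Definition ext_split (N M : dtm) (e : ext N M) : Prop :=
  exists s : N -> ext_mid e, is_morph s /\ forall y, ext_p e (s y) = y.

Definition ext_is_zero (N M : dtm) (C : Ext1 N M) : Prop :=
  exists e, C e /\ ext_split e.

Definition push_rel (N A B : dtm) (g : A -> B) (e : ext N A) (e' : ext N B) : Prop :=
  exists phi : ext_mid e -> ext_mid e',
    [/\ is_morph phi, forall m, phi (ext_i e m) = ext_i e' (g m) &
        forall x, ext_p e' (phi x) = ext_p e x].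

Definition pull_rel (N N' A : dtm) (f : N' -> N) (e : ext N A) (e' : ext N' A) : Prop :=
  exists phi : ext_mid e' -> ext_mid e,
    [/\ is_morph phi, forall m, phi (ext_i e' m) = ext_i e m &
        forall x, ext_p e (phi x) = f (ext_p e' x)].

Definition push_map (N A B : dtm) (g : A -> B) (C : Ext1 N A) : Ext1 N B :=
  fun e' => exists e, C e /\ push_rel g e e'.

Definition pull_map (N N' A : dtm) (f : N' -> N) (C : Ext1 N A) : Ext1 N' A :=
  fun e' => exists e, C e /\ pull_rel f e e'.

(* e is (equivalent to) the Baer sum of e1 and e2: there is a morphism from the
   fibre product E1 x_N E2 to E which is the codiagonal on M + M and lies over
   the identity of N. *)
Definition baer_rel (N M : dtm) (e1 e2 e : ext N M) : Prop :=
  exists phi : ext_mid e1 -> ext_mid e2 -> ext_mid e,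
    let compat x1 x2 := ext_p e1 x1 = ext_p e2 x2 in
    [/\ forall (c : K) x1 x2 y1 y2, compat x1 x2 -> compat y1 y2 ->
          phi (c *: x1 + y1) (c *: x2 + y2) = c *: phi x1 x2 + phi y1 y2,
        forall x1 x2, compat x1 x2 -> phi (dtm_t x1) (dtm_t x2) = dtm_t (phi x1 x2),
        forall x1 x2, compat x1 x2 ->
          phi (dtm_sigma x1) (dtm_sigma x2) = dtm_sigma (phi x1 x2),
        forall m1 m2, phi (ext_i e1 m1) (ext_i e2 m2) = ext_i e (m1 + m2) &
        forall x1 x2, compat x1 x2 -> ext_p e (phi x1 x2) = ext_p e1 x1].

Definition ext_add (N M : dtm) (C1 C2 : Ext1 N M) : Ext1 N M :=
  fun e => exists e1 e2, [/\ C1 e1, C2 e2 & baer_rel e1 e2 e].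

Definition ext_scale (a : {poly Fq}) (N M : dtm) (C : Ext1 N M) : Ext1 N M :=
  push_map (@tact a M) C.

Definition delta_cov (M1 M2 N : dtm) (E : ext M2 M1) (h : N -> M2) : Ext1 N M1 :=
  fun e => pull_rel h E e.
Definition delta_contra (M1 M2 N : dtm) (E : ext M2 M1) (k : M1 -> N) : Ext1 M2 N :=
  fun e => push_rel k E e.

Definition long_exact_cov (M1 M2 : dtm) (E : ext M2 M1) (N : dtm) : Prop :=
  let M := ext_mid E in
  let i := ext_i E in
  let p := ext_p E in
  let delta := delta_cov E (N := N) in
  ((forall f g : N -> M1, is_morph f -> is_morph g ->
         i \o hom_add f g = hom_add (i \o f) (i \o g)) /\
      (forall a (f : N -> M1), is_morph f -> i \o hom_scale a f = hom_scale a (i \o f)) /\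
      (forall f g : N -> M, is_morph f -> is_morph g ->
         p \o hom_add f g = hom_add (p \o f) (p \o g)) /\
      (forall a (f : N -> M), is_morph f -> p \o hom_scale a f = hom_scale a (p \o f)) /\
      (forall h1 h2 : N -> M2, is_morph h1 -> is_morph h2 ->
         delta (hom_add h1 h2) = ext_add (delta h1) (delta h2)) /\
      (forall a (h : N -> M2), is_morph h -> delta (hom_scale a h) = ext_scale a (delta h)) /\
      (forall C1 C2 : Ext1 N M1, is_class C1 -> is_class C2 ->
         push_map i (ext_add C1 C2) = ext_add (push_map i C1) (push_map i C2)) /\
      (forall a (C : Ext1 N M1), is_class C ->
         push_map i (ext_scale a C) = ext_scale a (push_map i C)) /\
      (forall C1 C2 : Ext1 N M, is_class C1 -> is_class C2 ->
         push_map p (ext_add C1 C2) = ext_add (push_map p C1) (push_map p C2)) /\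
      (forall a (C : Ext1 N M), is_class C ->
         push_map p (ext_scale a C) = ext_scale a (push_map p C)))
  /\
  ((forall f g : N -> M1, is_morph f -> is_morph g -> i \o f = i \o g -> f = g) /\
      (forall g : N -> M, is_morph g ->
         (p \o g = (fun _ => 0)) <-> exists f : N -> M1, is_morph f /\ g = i \o f) /\
      (forall h : N -> M2, is_morph h ->
         ext_is_zero (delta h) <-> exists g : N -> M, is_morph g /\ h = p \o g) /\
      (forall C : Ext1 N M1, is_class C ->
         ext_is_zero (push_map i C) <-> exists h : N -> M2, is_morph h /\ C = delta h) /\
      (forall C : Ext1 N M, is_class C ->
         ext_is_zero (push_map p C) <->
         exists C' : Ext1 N M1, is_class C' /\ C = push_map i C') /\
      (forall C : Ext1 N M2, is_class C ->
         exists C' : Ext1 N M, is_class C' /\ push_map p C' = C)).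

Definition long_exact_contra (M1 M2 : dtm) (E : ext M2 M1) (N : dtm) : Prop :=
  let M := ext_mid E in
  let i := ext_i E in
  let p := ext_p E in
  let delta := delta_contra E (N := N) in
  ((forall f g : M2 -> N, is_morph f -> is_morph g ->
         hom_add f g \o p = hom_add (f \o p) (g \o p)) /\
      (forall a (f : M2 -> N), is_morph f -> hom_scale a f \o p = hom_scale a (f \o p)) /\
      (forall f g : M -> N, is_morph f -> is_morph g ->
         hom_add f g \o i = hom_add (f \o i) (g \o i)) /\
      (forall a (f : M -> N), is_morph f -> hom_scale a f \o i = hom_scale a (f \o i)) /\
      (forall k1 k2 : M1 -> N, is_morph k1 -> is_morph k2 ->
         delta (hom_add k1 k2) = ext_add (delta k1) (delta k2)) /\
      (forall a (k : M1 -> N), is_morph k -> delta (hom_scale a k) = ext_scale a (delta k)) /\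
      (forall C1 C2 : Ext1 M2 N, is_class C1 -> is_class C2 ->
         pull_map p (ext_add C1 C2) = ext_add (pull_map p C1) (pull_map p C2)) /\
      (forall a (C : Ext1 M2 N), is_class C ->
         pull_map p (ext_scale a C) = ext_scale a (pull_map p C)) /\
      (forall C1 C2 : Ext1 M N, is_class C1 -> is_class C2 ->
         pull_map i (ext_add C1 C2) = ext_add (pull_map i C1) (pull_map i C2)) /\
      (forall a (C : Ext1 M N), is_class C ->
         pull_map i (ext_scale a C) = ext_scale a (pull_map i C)))
  /\
  ((forall f g : M2 -> N, is_morph f -> is_morph g -> f \o p = g \o p -> f = g) /\
      (forall g : M -> N, is_morph g ->
         (g \o i = (fun _ => 0)) <-> exists f : M2 -> N, is_morph f /\ g = f \o p) /\
      (forall k : M1 -> N, is_morph k ->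
         ext_is_zero (delta k) <-> exists g : M -> N, is_morph g /\ k = g \o i) /\
      (forall C : Ext1 M2 N, is_class C ->
         ext_is_zero (pull_map p C) <-> exists k : M1 -> N, is_morph k /\ C = delta k) /\
      (forall C : Ext1 M N, is_class C ->
         ext_is_zero (pull_map i C) <->
         exists C' : Ext1 M2 N, is_class C' /\ C = pull_map p C') /\
      (forall C : Ext1 M1 N, is_class C ->
         exists C' : Ext1 M N, is_class C' /\ pull_map i C' = C)).

End DualTMotives.

(* Main.v *)
Require Import Defs.
From HB Require Import structures.
From mathcomp Require Import all_boot all_order all_algebra all_field.
From Stdlib Require Import FunctionalExtensionality PropExtensionality ClassicalEpsilon.
Set Implicit Arguments. Unset Strict Implicit. Unset Printing Implicit Defensive.
Import GRing.Theory.
Local Open Scope ring_scope.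
Arguments ext_p [Fq K theta N M] e _.


Section Basics.
Variables (Fq : finFieldType) (K : fieldType) (theta : K).
Local Notation DT := (dtm Fq theta).
Local Notation q := #|Fq|.
Local Notation tt_ := (@dtm_t _ _ theta _).
Local Notation sg := (@dtm_sigma _ _ theta _).

Definition slin (A B : DT) (f : A -> B) :=
  (forall (c : K) x y, f (c *: x + y) = c *: f x + f y) /\
  (forall x, f (dtm_sigma x) = dtm_sigma (f x)).

Lemma idem0 (V : zmodType) (x : V) : x = x + x -> x = 0.
Proof. by move=> h; apply: (addrI x); rewrite addr0 -h. Qed.

Section SlinFacts.
Variables (A B : DT) (f : A -> B) (hf : slin f).
Lemma sl0 : f 0 = 0.
Proof. apply: idem0; have h := (proj1 hf) 1 0 0; by rewrite !scale1r !addr0 in h. Qed.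
Lemma slD x y : f (x + y) = f x + f y.
Proof. have h := (proj1 hf) 1 x y; by rewrite !scale1r in h. Qed.
Lemma slZ c x : f (c *: x) = c *: f x.
Proof. have h := (proj1 hf) c x 0; by rewrite !addr0 sl0 addr0 in h. Qed.
Lemma slN x : f (- x) = - f x.
Proof. by rewrite -scaleN1r slZ scaleN1r. Qed.
Lemma slB x y : f (x - y) = f x - f y.
Proof. by rewrite slD slN. Qed.
Lemma slS x : f (dtm_sigma x) = dtm_sigma (f x).
Proof. exact: (proj2 hf). Qed.
Lemma sl_sum I (r : seq I) P (F : I -> A) :
  f (\sum_(i <- r | P i) F i) = \sum_(i <- r | P i) f (F i).
Proof. exact: (big_morph f slD sl0). Qed.
End SlinFacts.

Section DtmFacts.
Variable (H : DT).
Lemma tD (x y : H) : dtm_t (x + y) = dtm_t x + dtm_t y.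
Proof. have h := dtm_t_linear 1 x y; by rewrite !scale1r in h. Qed.
Lemma sD (x y : H) : dtm_sigma (x + y) = dtm_sigma x + dtm_sigma y.
Proof. exact: dtm_sigma_add. Qed.
Lemma s0 : dtm_sigma (0 : H) = 0.
Proof. apply: idem0; have h := sD 0 0; by rewrite addr0 in h. Qed.
Lemma sN (x : H) : dtm_sigma (- x) = - dtm_sigma x.
Proof. apply/eqP; rewrite -subr_eq0 opprK -sD. by rewrite addNr s0. Qed.
Lemma s_sum I (r : seq I) P (F : I -> H) :
  dtm_sigma (\sum_(i <- r | P i) F i) = \sum_(i <- r | P i) dtm_sigma (F i).
Proof. exact: (big_morph _ sD s0). Qed.
Lemma slin_t : slin (@dtm_t _ _ _ H).
Proof. split; [exact: dtm_t_linear | move=> x; exact: dtm_t_sigma]. Qed.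
Lemma slin_id : slin (@id H).
Proof. by []. Qed.
End DtmFacts.

Lemma slin_comp (A B C : DT) (f : B -> C) (g : A -> B) : slin f -> slin g -> slin (f \o g).
Proof. move=> hf hg; split=> [c x y|x] /=; by rewrite ?((proj1 hg), (proj1 hf)) ?((proj2 hg), (proj2 hf)). Qed.

Lemma morphP (A B : DT) (f : A -> B) :
  is_morph f <-> slin f /\ (forall x, f (dtm_t x) = dtm_t (f x)).
Proof. split; [by case=> h1 h2 h3 | by case=> [[h1 h3] h2]]. Qed.

End Basics.


Section Roots.
Variables (Fq : finFieldType) (K : fieldType) (iota0 : {rmorphism Fq -> K}) (hK : perfect K).
Lemma qroot (x : K) : exists y : K, y ^+ #|Fq| == x.
Proof.
case: (finPcharP Fq) => p pp pch.
have pK : p \in [pchar K] := rmorph_pchar iota0 pch.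
have cq : #|Fq| = (p ^ logn p #|Fq|)%N := card_pprimeChar pch.
rewrite cq; elim: (logn p #|Fq|) x => [|n IH] x; first by exists x; rewrite expr1.
case: (hK pK x) => z hz; case: (IH z) => y /eqP hy; exists y.
by rewrite expnSr exprM hy hz.
Qed.
End Roots.

Section Sapply.
Variables (K : fieldType).
Lemma sapply_widen (V : lmodType K) (sg : V -> V) (f : {poly K}) h n :
  (size f <= n)%N -> sapply sg f h = \sum_(j < n) f`_j *: iter j sg h.
Proof.
move=> hn; rewrite /sapply (big_ord_widen n (fun j => f`_j *: iter j sg h) hn) big_mkcond.
apply: eq_bigr => i _; case: ifP => // /negbT; rewrite -leqNgt => hi.
by rewrite nth_default // scale0r.
Qed.
Lemma sapplyD (V : lmodType K) (sg : V -> V) (f g : {poly K}) h :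
  sapply sg (f + g) h = sapply sg f h + sapply sg g h.
Proof.
set n := maxn (size f) (size g).
rewrite (sapply_widen _ _ (n := n)); last exact: (leq_trans (size_polyD _ _)).
rewrite (sapply_widen _ _ (n := n) (leq_maxl _ _)) (sapply_widen _ _ (n := n) (leq_maxr _ _)).
by rewrite -big_split; apply: eq_bigr => i _; rewrite coefD scalerDl.
Qed.
Lemma sapplyZ (V : lmodType K) (sg : V -> V) (c : K) (f : {poly K}) h :
  sapply sg (c *: f) h = c *: sapply sg f h.
Proof.
rewrite (sapply_widen _ _ (size_scale_leq c f)) /sapply scaler_sumr.
by apply: eq_bigr => i _; rewrite coefZ scalerA.
Qed.
End Sapply.

Section Lift.
Variables (Fq : finFieldType) (K : fieldType) (iota0 : {rmorphism Fq -> K}) (theta : K)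
  (hK : perfect K).
Local Notation DT := (dtm Fq theta).

Definition rt (c : K) : K := xchoose (qroot iota0 hK c).
Lemma rtK c : rt c ^+ #|Fq| = c.
Proof. exact/eqP/(xchooseP (qroot iota0 hK c)). Qed.

Definition Tsh (f : {poly K}) : {poly K} :=
  \poly_(j < (size f).+1) (if j is j'.+1 then rt f`_j' else 0).

Lemma sapplyT (H : DT) f (h : H) :
  sapply (@dtm_sigma _ _ _ H) (Tsh f) h = dtm_sigma (sapply (@dtm_sigma _ _ _ H) f h).
Proof.
rewrite (sapply_widen _ _ (size_poly _ _)) big_ord_recl coef_poly /= scale0r add0r.
rewrite /sapply s_sum; apply: eq_bigr => i _.
rewrite coef_poly /= ltnS ltn_ord -{2}(rtK (f`_i)) dtm_sigma_semilinear.
by [].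
Qed.

Lemma iter_sl (A B : DT) (f : A -> B) (hf : slin f) j x :
  f (iter j (@dtm_sigma _ _ _ A) x) = iter j (@dtm_sigma _ _ _ B) (f x).
Proof. by elim: j => //= j IH; rewrite (slS hf) IH. Qed.

Lemma sapply_sl (A B : DT) (f : A -> B) (hf : slin f) g x :
  f (sapply (@dtm_sigma _ _ _ A) g x) = sapply (@dtm_sigma _ _ _ B) g (f x).
Proof.
by rewrite /sapply (sl_sum hf); apply: eq_bigr => i _; rewrite (slZ hf) (iter_sl hf).
Qed.

Lemma lift_exists (C X : DT) (p : X -> C) : slin p -> (forall y, exists x, p x = y) ->
  exists s : C -> X, slin s /\ forall c, p (s c) = c.
Proof.
move=> hp hs.
case: (dtm_free C) => n [e [Finv Fk kF]].
set F := (fun f : {ffun 'I_n -> {poly K}} => \sum_(i < n) sapply (@dtm_sigma _ _ _ C) (f i) (e i)) in Fk kF.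
pose x k := proj1_sig (constructive_indefinite_description _ (hs (e k))).
have hx k : p (x k) = e k by rewrite /x; case: constructive_indefinite_description.
pose s c := \sum_(i < n) sapply (@dtm_sigma _ _ _ X) (Finv c i) (x i).
have FL a c c' : Finv (a *: c + c') = [ffun i => a *: Finv c i + Finv c' i].
  rewrite -[RHS]Fk; congr Finv; rewrite /F.
  under eq_bigr => i _ do rewrite ffunE sapplyD sapplyZ.
  by rewrite big_split /= -scaler_sumr -/(F (Finv c)) -/(F (Finv c')) !kF.
have FS c : Finv (dtm_sigma c) = [ffun i => Tsh (Finv c i)].
  rewrite -[RHS]Fk; congr Finv; rewrite /F.
  under eq_bigr => i _ do rewrite ffunE sapplyT.
  by rewrite -s_sum -/(F (Finv c)) kF.
exists s; split; first split.
- move=> a c c'; rewrite /s FL.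
  under eq_bigr => i _ do rewrite ffunE sapplyD sapplyZ.
  by rewrite big_split /= -scaler_sumr.
- move=> c; rewrite /s FS s_sum; apply: eq_bigr => i _.
  by rewrite ffunE sapplyT.
- move=> c; rewrite /s (sl_sum hp) -[RHS]kF /F; apply: eq_bigr => i _.
  by rewrite (sapply_sl hp) hx.
Qed.
End Lift.


Lemma zmodE (V : zmodType) (a b c d : V) : a + b = c + d -> a - d = c - b.
Proof. by move=> h; apply/eqP; rewrite subr_eq addrAC -h addrK. Qed.
Lemma zmodE' (V : zmodType) (a b c d : V) : a - d = c - b -> a + b = c + d.
Proof. by move=> h; rewrite -(subrK d a) h addrAC subrK. Qed.

Section Coc.
Variables (Fq : finFieldType) (K : fieldType) (theta : K).
Local Notation DT := (dtm Fq theta).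

Lemma slin_add (A B : DT) (f g : A -> B) : slin f -> slin g -> slin (fun x => f x + g x).
Proof.
move=> hf hg; split=> [c x y|x].
  by rewrite (proj1 hf) (proj1 hg) scalerDr addrACA.
by rewrite (slS hf) (slS hg) sD.
Qed.
Lemma slin_opp (A B : DT) (f : A -> B) : slin f -> slin (fun x => - f x).
Proof.
move=> hf; split=> [c x y|x]; first by rewrite (proj1 hf) opprD scalerN.
by rewrite (slS hf) sN.
Qed.
Lemma slin_sub (A B : DT) (f g : A -> B) : slin f -> slin g -> slin (fun x => f x - g x).
Proof. by move=> hf hg; apply: slin_add => //; apply: slin_opp. Qed.
Lemma slin0 (A B : DT) : slin (fun _ : A => (0 : B)).
Proof. by split=> [c x y|x]; rewrite ?scaler0 ?addr0 ?s0. Qed.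

Section ExtFacts.
Variables (C A : DT) (e : ext C A).
Lemma ei_sl : slin (ext_i e). Proof. by case: (ext_i_morph e). Qed.
Lemma ep_sl : slin (ext_p e). Proof. by case: (ext_p_morph e). Qed.
Lemma ei_t a : ext_i e (dtm_t a) = dtm_t (ext_i e a). Proof. by case: (ext_i_morph e). Qed.
Lemma ep_t x : ext_p e (dtm_t x) = dtm_t (ext_p e x). Proof. by case: (ext_p_morph e). Qed.
Lemma ep_i a : ext_p e (ext_i e a) = 0.
Proof. by apply/(@ext_exact _ _ _ _ _ e); exists a. Qed.
Lemma ei_inj : injective (ext_i e). Proof. exact: (@ext_i_inj _ _ _ _ _ e). Qed.
End ExtFacts.

Record splitting (C A : DT) (e : ext C A) := Spl {
  sp_s : C -> ext_mid e; sp_r : ext_mid e -> A;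
  sp_s_sl : slin sp_s; sp_r_sl : slin sp_r;
  sp_ps : forall c, ext_p e (sp_s c) = c;
  sp_ri : forall a, sp_r (ext_i e a) = a;
  sp_dec : forall x, x = ext_i e (sp_r x) + sp_s (ext_p e x) }.

Definition cocy (C A : DT) (e : ext C A) (S : splitting e) : C -> A :=
  fun c => sp_r S (dtm_t (sp_s S c)).

Definition Bc (C A : DT) (psi : C -> A) :=
  exists f : C -> A, slin f /\ forall c, psi c = dtm_t (f c) - f (dtm_t c).

Section SplitFacts.
Variables (C A : DT) (e : ext C A) (S : splitting e).
Local Notation s := (sp_s S). Local Notation r := (sp_r S).
Local Notation i := (ext_i e). Local Notation p := (ext_p e).
Local Notation phi := (cocy S).
Lemma sp_rs c : r (s c) = 0.
Proof.
apply: (ei_inj (e:=e)); rewrite (sl0 (ei_sl e)).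
by apply: (addIr (s c)); rewrite add0r {3}(sp_dec S (s c)) sp_ps.
Qed.
Lemma cocy_sl : slin phi.
Proof.
apply: slin_comp; [exact: sp_r_sl | apply: slin_comp; [exact: slin_t | exact: sp_s_sl]].
Qed.
Lemma sp_ts c : dtm_t (s c) = i (phi c) + s (dtm_t c).
Proof. by rewrite {1}(sp_dec S (dtm_t (s c))) ep_t sp_ps. Qed.
Lemma sp_rt x : r (dtm_t x) = dtm_t (r x) + phi (p x).
Proof.
rewrite {1}(sp_dec S x) tD -ei_t sp_ts (slD (sp_r_sl S)) (slD (sp_r_sl S)).
by rewrite !sp_ri sp_rs addr0.
Qed.
End SplitFacts.

End Coc.

Section Coc2.
Variables (Fq : finFieldType) (K : fieldType) (iota0 : {rmorphism Fq -> K}) (theta : K)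
  (hK : perfect K).
Local Notation DT := (dtm Fq theta).

Lemma split_ex (C A : DT) (e : ext C A) : inhabited (splitting e).
Proof.
case: (lift_exists iota0 hK (ep_sl e) (ext_p_surj e)) => s [hs hps].
have hk x : ext_p e (x - s (ext_p e x)) = 0 by rewrite (slB (ep_sl e)) hps subrr.
pose r x := proj1_sig (constructive_indefinite_description _
                         (proj1 (@ext_exact _ _ _ _ _ e _) (hk x))).
have hr x : x - s (ext_p e x) = ext_i e (r x).
  by rewrite /r; case: constructive_indefinite_description.
have hdec x : x = ext_i e (r x) + s (ext_p e x) by rewrite -hr subrK.
have hrs : slin r.
  split=> [c x y|x]; apply: (ei_inj (e:=e)).
    rewrite (proj1 (ei_sl e)) -!hr (proj1 (ep_sl e)) (proj1 hs).
    by rewrite scalerBr opprD addrACA.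
  by rewrite (slS (ei_sl e)) -!hr (slS (ep_sl e)) (slS hs) sD sN.
have hri a : r (ext_i e a) = a.
  by apply: (ei_inj (e:=e)); rewrite -hr ep_i (sl0 hs) subr0.
by constructor; exact: (@Spl _ _ _ _ _ e s r hs hrs hps hri hdec).
Qed.
End Coc2.

Section K1.
Variables (Fq : finFieldType) (K : fieldType) (theta : K).
Local Notation DT := (dtm Fq theta).

Lemma mapext (C A C' A' : DT) (e : ext C A) (e' : ext C' A') (g : A -> A') (h : C -> C')
  (S : splitting e) (S' : splitting e') : is_morph g -> is_morph h ->
  (exists Phi : ext_mid e -> ext_mid e',
     [/\ is_morph Phi, forall a, Phi (ext_i e a) = ext_i e' (g a) &
         forall x, ext_p e' (Phi x) = h (ext_p e x)]) <->
  Bc (fun c => g (cocy S c) - cocy S' (h c)).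
Proof.
move=> /morphP [hg gt] /morphP [hh ht]; split.
- case=> Phi [/morphP [hP Pt] Pi Pp].
  exists (fun c => sp_r S' (Phi (sp_s S c))); split.
    exact: (slin_comp (sp_r_sl S') (slin_comp hP (sp_s_sl S))).
  move=> c; apply: zmodE.
  have E1 : sp_r S' (Phi (dtm_t (sp_s S c))) =
            g (cocy S c) + sp_r S' (Phi (sp_s S (dtm_t c))).
    by rewrite sp_ts (slD hP) Pi (slD (sp_r_sl S')) sp_ri.
  have E2 : sp_r S' (Phi (dtm_t (sp_s S c))) =
            dtm_t (sp_r S' (Phi (sp_s S c))) + cocy S' (h c).
    by rewrite Pt sp_rt Pp sp_ps.
  by rewrite -E1 E2.
- case=> f [hf hfe].
  have hf' c : g (cocy S c) + f (dtm_t c) = dtm_t (f c) + cocy S' (h c).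
    exact: zmodE' (hfe c).
  exists (fun x => ext_i e' (g (sp_r S x) + f (ext_p e x)) + sp_s S' (h (ext_p e x))); split.
  + apply/morphP; split.
      exact: (slin_add (slin_comp (ei_sl e') (slin_add (slin_comp hg (sp_r_sl S))
                 (slin_comp hf (ep_sl e)))) (slin_comp (sp_s_sl S') (slin_comp hh (ep_sl e)))).
    move=> x; rewrite sp_rt ep_t (slD hg) gt ht -addrA hf'.
    rewrite tD -ei_t sp_ts tD -gt.
    by rewrite !(slD (ei_sl e')) !addrA.
  + move=> a; rewrite sp_ri ep_i (sl0 hf) addr0 (sl0 hh) (sl0 (sp_s_sl S')) addr0.
    by [].
  + by move=> x; rewrite (slD (ep_sl e')) ep_i sp_ps add0r.
Qed.
End K1.


Section TW.
Variables (Fq : finFieldType) (K : fieldType) (theta : K).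
Local Notation DT := (dtm Fq theta).
Variables (A C : DT) (phi : C -> A) (hphi : slin phi).

Definition twt (x : (A * C)%type) : (A * C)%type := (dtm_t x.1 + phi x.2, dtm_t x.2).
Definition tws (x : (A * C)%type) : (A * C)%type := (dtm_sigma x.1, dtm_sigma x.2).

Lemma pD (u u' : A) (v v' : C) : (u, v) + (u', v') = (u + u', v + v') :> (A * C)%type.
Proof. by []. Qed.
Lemma pZ (c : K) (u : A) (v : C) : c *: (u, v) = (c *: u, c *: v) :> (A * C)%type.
Proof. by []. Qed.
Lemma pN (u : A) (v : C) : - (u, v) = (- u, - v) :> (A * C)%type.
Proof. by []. Qed.
Lemma p0 : (0 : (A * C)%type) = (0, 0).
Proof. by []. Qed.
Lemma twt_lin (c : K) (x y : (A * C)%type) : twt (c *: x + y) = c *: twt x + twt y.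
Proof.
case: x y => [a b] [a' b']; rewrite /twt /=.
rewrite pZ pD; congr pair; last exact: dtm_t_linear.
by rewrite dtm_t_linear (proj1 hphi) scalerDr addrACA.
Qed.

Lemma tws_add x y : tws (x + y) = tws x + tws y.
Proof. by case: x y => [a b] [a' b']; rewrite /tws /= pD !sD. Qed.
Lemma tws_semi (c : K) x : tws ((c ^+ #|Fq|) *: x) = c *: tws x.
Proof. by case: x => [a b]; rewrite /tws /= pZ !dtm_sigma_semilinear. Qed.
Lemma twt_tws x : twt (tws x) = tws (twt x).
Proof. by case: x => [a b]; rewrite /twt /tws /= !dtm_t_sigma (slS hphi) sD. Qed.

Lemma iter_s0 (H : DT) j : iter j (@dtm_sigma _ _ _ H) 0 = 0.
Proof. by elim: j => //= j ->; rewrite s0. Qed.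
Lemma sapply0 (H : DT) f : sapply (@dtm_sigma _ _ _ H) f 0 = 0.
Proof. by rewrite /sapply big1 // => j _; rewrite iter_s0 scaler0. Qed.

Lemma psum I (r : seq I) (P : pred I) (u : I -> A) (v : I -> C) :
  \sum_(i <- r | P i) ((u i, v i) : (A * C)%type) =
  (\sum_(i <- r | P i) u i, \sum_(i <- r | P i) v i).
Proof.
elim: r => [|x r IH]; rewrite ?big_nil ?big_cons //.
by case: (P x) => //; rewrite IH pD.
Qed.

Lemma iter_tws j (a : A) (b : C) : iter j tws (a, b) =
  (iter j (@dtm_sigma _ _ _ A) a, iter j (@dtm_sigma _ _ _ C) b).
Proof. by elim: j => //= j ->. Qed.

Lemma sapply_tws f (a : A) (b : C) : sapply tws f (a, b) =
  (sapply (@dtm_sigma _ _ _ A) f a, sapply (@dtm_sigma _ _ _ C) f b).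
Proof.
rewrite /sapply -psum; apply: eq_bigr => i _; by rewrite iter_tws pZ.
Qed.

Lemma split_l m n (k : 'I_m) : split (lshift n k) = inl k.
Proof. exact: (unsplitK (inl _ k)). Qed.
Lemma split_r m n (k : 'I_n) : split (rshift m k) = inr k.
Proof. exact: (unsplitK (inr _ k)). Qed.

Lemma tw_free : exists (n : nat) (e : 'I_n -> (A * C)%type),
  bijective (fun f : {ffun 'I_n -> {poly K}} => \sum_(i < n) sapply tws (f i) (e i)).
Proof.
case: (dtm_free A) => nA [eA [FAi FAk kFA]].
case: (dtm_free C) => nC [eC [FCi FCk kFC]].
pose e (i : 'I_(nA + nC)) : (A * C)%type :=
  match split i with inl k => (eA k, 0) | inr k => (0, eC k) end.
exists (nA + nC)%N, e.
set FA := (fun f : {ffun 'I_nA -> {poly K}} => _) in FAk kFA.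
set FC := (fun f : {ffun 'I_nC -> {poly K}} => _) in FCk kFC.
have Fval (u : {ffun 'I_(nA + nC) -> {poly K}}) :
  \sum_(i < nA + nC) sapply tws (u i) (e i) =
  (FA [ffun k => u (lshift nC k)], FC [ffun k => u (rshift nA k)]).
  rewrite big_split_ord /= /e.
  under eq_bigr => k _ do rewrite split_l sapply_tws.
  under [X in _ + X]eq_bigr => k _ do rewrite split_r sapply_tws.
  rewrite !psum pD /FA /FC; congr pair.
    rewrite [X in _ + X]big1 ?addr0; last by move=> k _; rewrite sapply0.
    by apply: eq_bigr => k _; rewrite ffunE.
  rewrite big1 ?add0r; last by move=> k _; rewrite sapply0.
  by apply: eq_bigr => k _; rewrite ffunE.
pose G (x : (A * C)%type) : {ffun 'I_(nA + nC) -> {poly K}} :=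
  [ffun i => match split i with inl k => FAi x.1 k | inr k => FCi x.2 k end].
exists G.
- move=> u; rewrite Fval; apply/ffunP => i; rewrite ffunE /=.
  case: split_ordP => k ->.
    by rewrite FAk ffunE.
  by rewrite FCk ffunE.
- case=> a b; rewrite Fval /G /=; congr pair.
    rewrite -[RHS]kFA; congr FA; apply/ffunP => k; by rewrite !ffunE split_l.
  rewrite -[RHS]kFC; congr FC; apply/ffunP => k; by rewrite !ffunE split_r.
Qed.

Lemma iter_add (V : zmodType) (f : V -> V) (hf : forall x y, f (x + y) = f x + f y) n x y :
  iter n f (x + y) = iter n f x + iter n f y.
Proof. by elim: n => //= n ->; rewrite hf. Qed.

Lemma tau_sigma (H : DT) n (y : H) : exists y' : H,
  iter n (fun x => dtm_t x - theta *: x) (dtm_sigma y) = dtm_sigma y'.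
Proof.
elim: n => [|n [y' IH]]; first by exists y.
exists (dtm_t y' - (theta ^+ #|Fq|) *: y'); rewrite /= IH.
by rewrite sD sN dtm_sigma_semilinear dtm_t_sigma.
Qed.

Local Notation twtau := (fun x : (A * C)%type => twt x - theta *: x).

Lemma twtau_add x y : twtau (x + y) = twtau x + twtau y.
Proof.
have h := twt_lin 1 x y; rewrite !scale1r in h.
by rewrite h scalerDr opprD addrACA.
Qed.

Lemma twtau_snd n (a : A) (b : C) :
  (iter n twtau (a, b)).2 = iter n (fun x => dtm_t x - theta *: x) b.
Proof.
elim: n => //= n; case: (iter n twtau (a, b)) => a1 b1 /= <-.
by [].
Qed.

Lemma twtau_fst0 n (a : A) :
  iter n twtau (a, 0) = (iter n (fun x => dtm_t x - theta *: x) a, 0).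
Proof.
elim: n => //= n ->; rewrite /twt /= (sl0 hphi) addr0.
have -> : dtm_t (0 : C) = 0 by exact: (sl0 (slin_t C)).
by rewrite pZ pN pD scaler0 oppr0 addr0.
Qed.

Lemma tw_nilp : exists l : nat, forall h : (A * C)%type, exists h' : (A * C)%type,
  iter l twtau h = tws h'.
Proof.
case: (dtm_nilp A) => lA hA; case: (dtm_nilp C) => lC hC.
exists (lA + lC)%N => -[a b].
rewrite iterD.
case: (hC b) => c' hc'.
have E : iter lC twtau (a, b) = ((iter lC twtau (a, b)).1, 0) + tws (0, c').
  rewrite /tws /= s0 pD addr0 add0r -hc' -(twtau_snd lC a b).
  by case: (iter lC twtau (a, b)).
rewrite E iter_add; last exact: twtau_add.
rewrite twtau_fst0.
case: (hA (iter lC twtau (a, b)).1) => a2 ->.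
have [y'' ->] : exists y'', iter lA twtau (tws (0, c')) = tws y''.
  elim: lA {hA} => [|n [y' IH]]; first by exists (0, c').
  exists (twt y' - (theta ^+ #|Fq|) *: y'); rewrite /= IH.
  rewrite twt_tws; case: y' {IH} => u v; rewrite /tws /twt /= !pZ !pN !pD.
  by congr pair; rewrite [in RHS]sD sN dtm_sigma_semilinear.
exists ((a2, 0) + y''); rewrite tws_add; congr (_ + _).
by rewrite /tws /= s0.
Qed.

Definition TWd : DT := @DTM _ _ theta (A * C)%type twt tws twt_lin tws_add tws_semi
  twt_tws tw_free tw_nilp.

End TW.


Section BcFacts.
Variables (Fq : finFieldType) (K : fieldType) (theta : K).
Local Notation DT := (dtm Fq theta).
Variables (C A : DT).

Lemma Bc_ext (psi psi' : C -> A) : (forall c, psi c = psi' c) -> Bc psi -> Bc psi'.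
Proof. by move=> e [f [hf hfe]]; exists f; split => // c; rewrite -e. Qed.
Lemma Bc0 : Bc (fun _ : C => (0 : A)).
Proof. exists (fun _ => 0); split; first exact: slin0. by move=> c; rewrite (sl0 (slin_t A)) subrr. Qed.
Lemma BcD (psi1 psi2 : C -> A) : Bc psi1 -> Bc psi2 -> Bc (fun c => psi1 c + psi2 c).
Proof.
move=> [f1 [h1 e1]] [f2 [h2 e2]]; exists (fun c => f1 c + f2 c); split; first exact: slin_add.
by move=> c; rewrite e1 e2 tD opprD addrACA.
Qed.
Lemma BcN (psi : C -> A) : Bc psi -> Bc (fun c => - psi c).
Proof.
move=> [f [h e]]; exists (fun c => - f c); split; first exact: slin_opp.
by move=> c; rewrite e (slN (slin_t A)) opprB opprK addrC.
Qed.
Lemma BcB (psi1 psi2 : C -> A) : Bc psi1 -> Bc psi2 -> Bc (fun c => psi1 c - psi2 c).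
Proof. by move=> h1 h2; apply: BcD => //; apply: BcN. Qed.
Lemma Bc_comm (psi : C -> A) : slin psi -> Bc (fun x => psi (dtm_t x) - dtm_t (psi x)).
Proof.
move=> hp; exists (fun c => - psi c); split; first exact: slin_opp.
by move=> c; rewrite (slN (slin_t A)) opprK addrC.
Qed.
Lemma Bc_scal (c : K) (psi : C -> A) : c ^+ #|Fq| = c -> Bc psi -> Bc (fun x => c *: psi x).
Proof.
move=> hc [f [hf e]]; exists (fun x => c *: f x); split.
  split=> [a x y|x]; first by rewrite (proj1 hf) scalerDr !scalerA mulrC.
  by rewrite (slS hf) -[in RHS]hc dtm_sigma_semilinear.
by move=> x; rewrite e (slZ (slin_t A)) scalerBr.
Qed.
End BcFacts.

Section BcFacts2.
Variables (Fq : finFieldType) (K : fieldType) (theta : K).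
Local Notation DT := (dtm Fq theta).
Lemma Bc_compl (C A A' : DT) (g : A -> A') (psi : C -> A) :
  is_morph g -> Bc psi -> Bc (fun c => g (psi c)).
Proof.
move=> /morphP [hg gt] [f [hf e]]; exists (fun c => g (f c)); split; first exact: slin_comp.
by move=> c; rewrite e (slB hg) gt.
Qed.
Lemma Bc_compr (C C' A : DT) (h : C' -> C) (psi : C -> A) :
  is_morph h -> Bc psi -> Bc (fun c => psi (h c)).
Proof.
move=> /morphP [hh ht] [f [hf e]]; exists (fun c => f (h c)); split; first exact: slin_comp.
by move=> c; rewrite e ht.
Qed.
Lemma morph_id (H : DT) : is_morph (@id H).
Proof. by []. Qed.
Lemma morph_comp (A B C : DT) (f : B -> C) (g : A -> B) :
  is_morph f -> is_morph g -> is_morph (f \o g).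
Proof.
move=> /morphP [hf ft] /morphP [hg gt]; apply/morphP; split; first exact: slin_comp.
by move=> x /=; rewrite gt ft.
Qed.
Lemma morph_t (H : DT) : is_morph (@dtm_t _ _ _ H).
Proof. by apply/morphP; split; [exact: slin_t | by []]. Qed.
Lemma morph_iter_t (H : DT) n : is_morph (iter n (@dtm_t _ _ _ H)).
Proof.
elim: n => [|n IH]; first exact: morph_id.
have -> : iter n.+1 (@dtm_t _ _ _ H) = (@dtm_t _ _ _ H) \o iter n (@dtm_t _ _ _ H).
  by apply: functional_extensionality.
by apply: morph_comp => //; exact: morph_t.
Qed.
End BcFacts2.

Section TWext.
Variables (Fq : finFieldType) (K : fieldType) (theta : K).
Local Notation DT := (dtm Fq theta).
Variables (A C : DT) (phi : C -> A) (hphi : slin phi).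
Local Notation T := (TWd hphi).

Lemma twi_morph : is_morph (fun a : A => ((a, 0) : T)).
Proof.
split.
- by move=> c x y; rewrite /= pZ pD scaler0 addr0.
- move=> x; rewrite /= /twt /= (sl0 hphi) addr0.
  by have -> : dtm_t (0 : C) = 0 by exact: (sl0 (slin_t C)).
- by move=> x; rewrite /= /tws /= s0.
Qed.
Lemma twp_morph : is_morph (fun x : T => x.2).
Proof. by split => [c [a b] [a' b']|[a b]|[a b]]. Qed.
Lemma twi_inj : injective (fun a : A => ((a, 0) : T)).
Proof. by move=> a a' []. Qed.
Lemma twp_surj : forall y : C, exists x : T, x.2 = y.
Proof. by move=> y; exists (0, y). Qed.
Lemma tw_exact : forall x : T, x.2 = 0 <-> exists m : A, x = (m, 0).
Proof. by case=> a b /=; split => [->|[m [_ ->]]]; [exists a|]. Qed.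

Definition TWe : ext C A :=
  @Ext _ _ theta C A T _ _ twi_morph twp_morph twi_inj twp_surj tw_exact.

Definition TWS : splitting TWe.
Proof.
apply: (@Spl _ _ _ _ _ TWe (fun c => ((0, c) : T)) (fun x : T => x.1)).
- split => [c x y|x] /=; first by rewrite pZ pD scaler0 addr0.
  by rewrite /tws /= s0.
- by split => [c [a b] [a' b']|[a b]].
- by [].
- by [].
- by case=> a b /=; rewrite pD addr0 add0r.
Defined.

Lemma TWS_cocy c : cocy TWS c = phi c.
Proof.
rewrite /cocy /= /twt /=.
by rewrite (sl0 (slin_t A)) add0r.
Qed.
End TWext.

Lemma subsub (V : zmodType) (a b c : V) : (a - b) - (a - c) = c - b.
Proof. by rewrite opprB addrC addrA subrK. Qed.

Lemma subsub2 (V : zmodType) (a b c : V) : (a - c) - (b - c) = a - b.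
Proof. by rewrite opprB addrA subrK. Qed.

Section ClsSec.
Variables (Fq : finFieldType) (K : fieldType) (iota0 : {rmorphism Fq -> K}) (theta : K)
  (hK : perfect K).
Local Notation DT := (dtm Fq theta).

Definition Cls (C A : DT) (psi : C -> A) : Ext1 C A :=
  fun e => exists S : splitting e, Bc (fun c => cocy S c - psi c).

Lemma cocy_indep (C A : DT) (e : ext C A) (S1 S2 : splitting e) :
  Bc (fun c => cocy S1 c - cocy S2 c).
Proof.
have := proj1 (mapext S1 S2 (morph_id A) (morph_id C)).
by apply; exists id; split => //; exact: morph_id.
Qed.

Lemma Cls_iff (C A : DT) (psi : C -> A) (e : ext C A) (S : splitting e) :
  Cls psi e <-> Bc (fun c => cocy S c - psi c).
Proof.
split; last by exists S.
case=> S' h; apply: (Bc_ext _ (BcD (cocy_indep S S') h)) => c.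
by rewrite addrA subrK.
Qed.

Lemma Cls_ne (C A : DT) (psi : C -> A) : slin psi -> exists e, Cls psi e.
Proof.
move=> hp; exists (TWe hp), (TWS hp).
by apply: (Bc_ext _ (Bc0 C A)) => c; rewrite TWS_cocy subrr.
Qed.

Lemma Cls_eq (C A : DT) (psi1 psi2 : C -> A) :
  Bc (fun c => psi1 c - psi2 c) -> Cls psi1 = Cls psi2.
Proof.
move=> h; apply: functional_extensionality => e; apply: propositional_extensionality.
split=> -[S hS]; exists S.
  by apply: (Bc_ext _ (BcD hS h)) => c; rewrite addrA subrK.
by apply: (Bc_ext _ (BcB hS h)) => c; rewrite opprB addrA subrK.
Qed.

Lemma Cls_inj (C A : DT) (psi1 psi2 : C -> A) : slin psi1 ->
  Cls psi1 = Cls psi2 -> Bc (fun c => psi1 c - psi2 c).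
Proof.
move=> hp E; case: (Cls_ne hp) => e h1.
have h2 : Cls psi2 e by rewrite -E.
case: h1 => S h1; have /(Cls_iff _ S) h2' := h2.
by apply: (Bc_ext _ (BcB h2' h1)) => c; rewrite subsub.
Qed.

Lemma class_iff (C A : DT) (X : Ext1 C A) :
  is_class X <-> exists psi : C -> A, slin psi /\ X = Cls psi.
Proof.
split.
- case=> e he; case: (split_ex iota0 hK e) => S.
  exists (cocy S); split; first exact: cocy_sl.
  apply: functional_extensionality => e'; apply: propositional_extensionality.
  case: (split_ex iota0 hK e') => S'.
  rewrite he (Cls_iff _ S') /ext_equiv.
  rewrite (mapext S S' (morph_id A) (morph_id C)).
  by split=> h; move: (BcN h) => h'; apply: (Bc_ext _ h') => c; rewrite opprB.
- case=> psi [hp ->]; case: (Cls_ne hp) => e he; exists e => e'.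
  case: (split_ex iota0 hK e) => S; case: (split_ex iota0 hK e') => S'.
  rewrite /ext_equiv (mapext S S' (morph_id A) (morph_id C)) (Cls_iff _ S').
  move: he; rewrite (Cls_iff _ S) => he.
  split=> h.
    by apply: (Bc_ext _ (BcB he h)) => c; rewrite /= /id subsub2.
  by apply: (Bc_ext _ (BcB he h)) => c; rewrite /= /id subsub.
Qed.
End ClsSec.

Section ClsSec2.
Variables (Fq : finFieldType) (K : fieldType) (iota0 : {rmorphism Fq -> K}) (theta : K)
  (hK : perfect K).
Local Notation DT := (dtm Fq theta).
Local Notation Cls := (@Cls Fq K theta).

Lemma push_iff (C A B : DT) (g : A -> B) (e : ext C A) (e' : ext C B)
  (S : splitting e) (S' : splitting e') : is_morph g ->
  push_rel g e e' <-> Bc (fun c => g (cocy S c) - cocy S' c).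
Proof. move=> hg; exact: (mapext S S' hg (morph_id C)). Qed.

Lemma pull_iff (C C' A : DT) (h : C' -> C) (e : ext C A) (e' : ext C' A)
  (S : splitting e) (S' : splitting e') : is_morph h ->
  pull_rel h e e' <-> Bc (fun c => cocy S' c - cocy S (h c)).
Proof. move=> hh; exact: (mapext S' S (morph_id A) hh). Qed.

Lemma push_Cls (C A B : DT) (g : A -> B) (psi : C -> A) : is_morph g -> slin psi ->
  push_map g (Cls psi) = Cls (fun c => g (psi c)).
Proof.
move=> hg hp; have hgs := proj1 (morphP g) hg; have hgl := hgs.1.
apply: functional_extensionality => e'; apply: propositional_extensionality.
case: (split_ex iota0 hK e') => S'; rewrite (Cls_iff _ S').
split.
- case=> e [he hpush]; case: (split_ex iota0 hK e) => S.
  move: he hpush; rewrite (Cls_iff _ S) (push_iff S S' hg) => he hpu.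
  apply: (Bc_ext _ (BcB (Bc_compl hg he) hpu)) => c.
  by rewrite (slB hgl) subsub.
- move=> h; case: (Cls_ne hp) => e he; exists e; split => //.
  case: (split_ex iota0 hK e) => S; move: he; rewrite (Cls_iff _ S) (push_iff S S' hg) => he.
  apply: (Bc_ext _ (BcB (Bc_compl hg he) h)) => c.
  by rewrite (slB hgl) subsub2.
Qed.

Lemma pull_Cls (C C' A : DT) (h : C' -> C) (psi : C -> A) : is_morph h -> slin psi ->
  pull_map h (Cls psi) = Cls (fun c => psi (h c)).
Proof.
move=> hh hp.
apply: functional_extensionality => e'; apply: propositional_extensionality.
case: (split_ex iota0 hK e') => S'; rewrite (Cls_iff _ S').
split.
- case=> e [he hpull]; case: (split_ex iota0 hK e) => S.
  move: he hpull; rewrite (Cls_iff _ S) (pull_iff S S' hh) => he hpu.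
  apply: (Bc_ext _ (BcD hpu (Bc_compr hh he))) => c.
  by rewrite addrA subrK.
- move=> h'; case: (Cls_ne hp) => e he; exists e; split => //.
  case: (split_ex iota0 hK e) => S; move: he; rewrite (Cls_iff _ S) (pull_iff S S' hh) => he.
  apply: (Bc_ext _ (BcB h' (Bc_compr hh he))) => c.
  by rewrite subsub2.
Qed.
End ClsSec2.

Lemma zh (V : zmodType) (a b d : V) : a - b + d - a = d - b.
Proof. by rewrite addrAC [a - b]addrC addrK addrC. Qed.
Lemma ac3 (K : fieldType) (V : lmodType K) (a : K) (x1 y1 x2 y2 x3 y3 : V) :
  (a *: x1 + y1) + (a *: x2 + y2) + (a *: x3 + y3) = a *: (x1 + x2 + x3) + (y1 + y2 + y3).
Proof. by rewrite (addrACA (a *: x1)) (addrACA (a *: x1 + a *: x2)) !scalerDr. Qed.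

Section ClsSec3.
Variables (Fq : finFieldType) (K : fieldType) (iota0 : {rmorphism Fq -> K}) (theta : K)
  (hK : perfect K).
Local Notation DT := (dtm Fq theta).
Local Notation Cls := (@Cls Fq K theta).

Lemma split_iff (C A : DT) (e : ext C A) (S : splitting e) :
  ext_split e <-> Bc (cocy S).
Proof.
split.
- case=> s0 [/morphP [hs0 s0t] hps0].
  exists (fun c => - sp_r S (s0 c)); split.
    exact: (slin_opp (slin_comp (sp_r_sl S) hs0)).
  move=> c; have E1 : sp_r S (s0 (dtm_t c)) = dtm_t (sp_r S (s0 c)) + cocy S c.
    by rewrite s0t sp_rt hps0.
  by rewrite (slN (slin_t A)) opprK E1 addKr.
- case=> f [hf hfe]; exists (fun c => sp_s S c - ext_i e (f c)); split.
    apply/morphP; split.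
      exact: (slin_sub (sp_s_sl S) (slin_comp (ei_sl e) hf)).
    move=> c; rewrite (slB (slin_t _)) sp_ts -ei_t hfe (slB (ei_sl e)).
    by rewrite zh.
  by move=> c; rewrite (slB (ep_sl e)) sp_ps ep_i subr0.
Qed.

Lemma zero_Cls (C A : DT) (psi : C -> A) : slin psi ->
  ext_is_zero (Cls psi) <-> Bc psi.
Proof.
move=> hp; split.
- case=> e [[S hS] hsp]; have hphi := (split_iff S).1 hsp.
  by apply: (Bc_ext _ (BcB hphi hS)) => c; rewrite opprB addrC subrK.
- move=> h; case: (Cls_ne hp) => e he; exists e; split => //.
  case: (split_ex iota0 hK e) => S; apply/(split_iff S).
  move: he; rewrite (Cls_iff _ S) => he.
  by apply: (Bc_ext _ (BcD he h)) => c; rewrite subrK.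
Qed.
End ClsSec3.

Section Baer.
Variables (Fq : finFieldType) (K : fieldType) (iota0 : {rmorphism Fq -> K}) (theta : K)
  (hK : perfect K).
Local Notation DT := (dtm Fq theta).
Local Notation Cls := (@Cls Fq K theta).

Lemma baer_iff (C A : DT) (e1 e2 e : ext C A)
  (S1 : splitting e1) (S2 : splitting e2) (S : splitting e) :
  baer_rel e1 e2 e <-> Bc (fun c => cocy S1 c + cocy S2 c - cocy S c).
Proof.
split.
- case=> ph /= [h1 h2 h3 h4 h5].
  have cp c : ext_p e1 (sp_s S1 c) = ext_p e2 (sp_s S2 c) by rewrite !sp_ps.
  have cpi a b : ext_p e1 (ext_i e1 a) = ext_p e2 (ext_i e2 b) by rewrite !ep_i.
  exists (fun c => sp_r S (ph (sp_s S1 c) (sp_s S2 c))); split.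
    split=> [a c c'|c].
      by rewrite (proj1 (sp_s_sl S1)) (proj1 (sp_s_sl S2)) h1 // (proj1 (sp_r_sl S)).
    by rewrite (slS (sp_s_sl S1)) (slS (sp_s_sl S2)) h3 // (slS (sp_r_sl S)).
  move=> c; apply: zmodE.
  have E1 : sp_r S (ph (dtm_t (sp_s S1 c)) (dtm_t (sp_s S2 c))) =
            dtm_t (sp_r S (ph (sp_s S1 c) (sp_s S2 c))) + cocy S c.
    by rewrite h2 // sp_rt h5 // sp_ps.
  have E2 : sp_r S (ph (dtm_t (sp_s S1 c)) (dtm_t (sp_s S2 c))) =
            cocy S1 c + cocy S2 c + sp_r S (ph (sp_s S1 (dtm_t c)) (sp_s S2 (dtm_t c))).
    rewrite !sp_ts.
    have := h1 1 _ _ _ _ (cpi (cocy S1 c) (cocy S2 c)) (cp (dtm_t c)).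
    rewrite !scale1r => ->.
    by rewrite h4 (slD (sp_r_sl S)) sp_ri.
  by rewrite -E2 E1.
- case=> f [hf hfe].
  have hf' c : cocy S1 c + cocy S2 c + f (dtm_t c) = dtm_t (f c) + cocy S c.
    exact: zmodE' (hfe c).
  exists (fun x1 x2 => ext_i e (sp_r S1 x1 + sp_r S2 x2 + f (ext_p e1 x1)) +
                        sp_s S (ext_p e1 x1)).
  split.
  + move=> a x1 x2 y1 y2 _ _.
    rewrite (proj1 (sp_r_sl S1)) (proj1 (sp_r_sl S2)) (proj1 (ep_sl e1)) (proj1 hf).
    rewrite ac3 (proj1 (ei_sl e)) (proj1 (sp_s_sl S)).
    by rewrite addrACA -scalerDr.
  + move=> x1 x2 hc.
    have L1 : ext_i e (sp_r S1 (dtm_t x1) + sp_r S2 (dtm_t x2) + f (ext_p e1 (dtm_t x1)))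
              + sp_s S (ext_p e1 (dtm_t x1)) =
              ext_i e (dtm_t (sp_r S1 x1) + dtm_t (sp_r S2 x2) + (dtm_t (f (ext_p e1 x1))
                 + cocy S (ext_p e1 x1))) + sp_s S (dtm_t (ext_p e1 x1)).
      rewrite !sp_rt ep_t -hc -(hf' (ext_p e1 x1)).
      by rewrite (addrACA (dtm_t (sp_r S1 x1))) -(addrA (dtm_t (sp_r S1 x1) + dtm_t (sp_r S2 x2))).
    by rewrite L1 tD -ei_t sp_ts !tD [RHS]addrA -(slD (ei_sl e)) !addrA.
  + move=> x1 x2 hc.
    rewrite (slS (sp_r_sl S1)) (slS (sp_r_sl S2)) (slS (ep_sl e1)) (slS hf).
    by rewrite -!sD [RHS]sD (slS (ei_sl e)) (slS (sp_s_sl S)).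
  + move=> m1 m2; rewrite !sp_ri ep_i (sl0 hf) addr0 (sl0 (sp_s_sl S)) addr0.
    by [].
  + by move=> x1 x2 hc; rewrite (slD (ep_sl e)) ep_i sp_ps add0r.
Qed.

Lemma add_Cls (C A : DT) (psi1 psi2 : C -> A) : slin psi1 -> slin psi2 ->
  ext_add (Cls psi1) (Cls psi2) = Cls (fun c => psi1 c + psi2 c).
Proof.
move=> hp1 hp2.
apply: functional_extensionality => e; apply: propositional_extensionality.
case: (split_ex iota0 hK e) => S; rewrite (Cls_iff _ S).
split.
- case=> e1 [e2 [he1 he2 hb]].
  case: (split_ex iota0 hK e1) => S1; case: (split_ex iota0 hK e2) => S2.
  move: he1 he2 hb; rewrite (Cls_iff _ S1) (Cls_iff _ S2) (baer_iff S1 S2 S) => he1 he2 hb.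
  apply: (Bc_ext _ (BcB (BcD he1 he2) hb)) => c.
  by rewrite addrACA -opprD subsub.
- move=> h; case: (Cls_ne hp1) => e1 he1; case: (Cls_ne hp2) => e2 he2.
  exists e1, e2; split => //.
  case: (split_ex iota0 hK e1) => S1; case: (split_ex iota0 hK e2) => S2.
  move: he1 he2; rewrite (Cls_iff _ S1) (Cls_iff _ S2) (baer_iff S1 S2 S) => he1 he2.
  apply: (Bc_ext _ (BcB (BcD he1 he2) h)) => c.
  by rewrite addrACA -opprD subsub2.
Qed.
End Baer.


Section Tact.
Variables (Fq : finFieldType) (K : fieldType) (iota0 : {rmorphism Fq -> K}) (theta : K)
  (hK : perfect K).
Local Notation DT := (dtm Fq theta).
Local Notation Cls := (@Cls Fq K theta).

Lemma iotaq (x : Fq) : iota0 x ^+ #|Fq| = iota0 x.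
Proof. by rewrite -rmorphXn expf_card. Qed.

Lemma iter_nat (A B : DT) (g : A -> B) : is_morph g -> forall n x,
  g (iter n (@dtm_t _ _ _ A) x) = iter n (@dtm_t _ _ _ B) (g x).
Proof. by move=> /morphP [hg gt]; elim=> //= n IH x; rewrite gt IH. Qed.

Lemma tact_nat (A B : DT) (g : A -> B) a x : is_morph g ->
  g (tact iota0 a x) = tact iota0 a (g x).
Proof.
move=> hgm; have hg := (proj1 (morphP g) hgm).1.
rewrite /tact (sl_sum hg); apply: eq_bigr => i _.
by rewrite (slZ hg) (iter_nat hgm).
Qed.

Lemma tact_morph (H : DT) a : is_morph (tact iota0 a (M := H)).
Proof.
apply/morphP; split; first split.
- move=> c x y; rewrite /tact scaler_sumr -big_split; apply: eq_bigr => i _ /=.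
  have hi := (proj1 (morphP _) (morph_iter_t H i)).1.
  by rewrite (proj1 hi) scalerDr !scalerA mulrC.
- move=> x; rewrite /tact s_sum; apply: eq_bigr => i _.
  have hi := (proj1 (morphP _) (morph_iter_t H i)).1.
  by rewrite -[in RHS](iotaq a`_i) dtm_sigma_semilinear (slS hi).
- move=> x; rewrite /tact (sl_sum (slin_t H)); apply: eq_bigr => i _.
  by rewrite (slZ (slin_t H)) (iter_nat (morph_t H)).
Qed.

Lemma morph_hom_scale (A B : DT) a (f : A -> B) : is_morph f -> is_morph (hom_scale iota0 a f).
Proof. by move=> hf; apply: (morph_comp (tact_morph B a) hf). Qed.

Lemma morph_hom_add (A B : DT) (f g : A -> B) : is_morph f -> is_morph g -> is_morph (hom_add f g).
Proof.
move=> /morphP [hf ft] /morphP [hg gt]; apply/morphP; split; first exact: slin_add.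
by move=> x; rewrite /hom_add ft gt tD.
Qed.

Lemma Bc_sum (C A : DT) I (r : seq I) (F : I -> C -> A) :
  (forall i, Bc (F i)) -> Bc (fun x => \sum_(i <- r) F i x).
Proof.
move=> h; elim: r => [|j r IH].
  by apply: (Bc_ext _ (Bc0 C A)) => x; rewrite big_nil.
by apply: (Bc_ext _ (BcD (h j) IH)) => x; rewrite big_cons.
Qed.

Lemma Bc_tact (C A : DT) (psi : C -> A) a : slin psi ->
  Bc (fun x => psi (tact iota0 a x) - tact iota0 a (psi x)).
Proof.
move=> hp.
have D n : Bc (fun x => psi (iter n (@dtm_t _ _ _ C) x) - iter n (@dtm_t _ _ _ A) (psi x)).
  elim: n => [|n IH].
    by apply: (Bc_ext _ (Bc0 C A)) => x /=; rewrite subrr.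
  have := BcD (Bc_compr (morph_iter_t C n) (Bc_comm hp)) (Bc_compl (morph_t A) IH).
  apply: Bc_ext => x /=; rewrite (slB (slin_t A)) addrA subrK.
  by rewrite (iter_nat (morph_t C)).
have := @Bc_sum C A _ (index_enum 'I_(size a))
          (fun i x => iota0 a`_i *: (psi (iter i (@dtm_t _ _ _ C) x) -
                                     iter i (@dtm_t _ _ _ A) (psi x))).
case.
  by move=> i; apply: Bc_scal; [exact: iotaq | exact: D].
move=> f [hf hfe]; exists f; split => // x; rewrite -hfe.
by rewrite /tact (sl_sum hp) -sumrB; apply: eq_bigr => i _; rewrite (slZ hp) scalerBr.
Qed.

Lemma delta_cov_Cls (M2 M1 N : DT) (E : ext M2 M1) (SE : splitting E) (h : N -> M2) :
  is_morph h -> delta_cov E h = Cls (fun c => cocy SE (h c)).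
Proof.
move=> hh; apply: functional_extensionality => e; apply: propositional_extensionality.
case: (split_ex iota0 hK e) => S.
by rewrite (Cls_iff _ S) /delta_cov (pull_iff SE S hh).
Qed.

Lemma delta_contra_Cls (M2 M1 N : DT) (E : ext M2 M1) (SE : splitting E) (k : M1 -> N) :
  is_morph k -> delta_contra E k = Cls (fun c => k (cocy SE c)).
Proof.
move=> hk; apply: functional_extensionality => e; apply: propositional_extensionality.
case: (split_ex iota0 hK e) => S.
rewrite (Cls_iff _ S) /delta_contra (push_iff SE S hk).
by split=> h; move: (BcN h) => h'; apply: (Bc_ext _ h') => c; rewrite opprB.
Qed.

Lemma scale_Cls (C A : DT) a (psi : C -> A) : slin psi ->
  ext_scale iota0 a (Cls psi) = Cls (fun c => tact iota0 a (psi c)).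
Proof. move=> hp; exact: (push_Cls iota0 hK (tact_morph A a) hp). Qed.
End Tact.


Section Main.
Variables (Fq : finFieldType) (K : fieldType) (iota0 : {rmorphism Fq -> K}) (theta : K)
  (hK : perfect K).
Local Notation DT := (dtm Fq theta).
Local Notation Cls := (@Cls Fq K theta).

Lemma m2s (A B : DT) (f : A -> B) : is_morph f -> slin f.
Proof. by move=> h; exact: (proj1 (morphP f) h).1. Qed.

Lemma cov_part (M1 M2 : DT) (E : ext M2 M1) (N : DT) : long_exact_cov iota0 E N.
Proof.
case: (split_ex iota0 hK E) => SE.
have im := ext_i_morph E; have pm := ext_p_morph E.
have isl := ei_sl E; have psl := ep_sl E.
have phisl := cocy_sl SE.
rewrite /long_exact_cov; cbv zeta.
repeat match goal with |- _ /\ _ => split end.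
- by move=> f g _ _; apply: functional_extensionality => x; rewrite /= /hom_add (slD isl).
- by move=> a f _; apply: functional_extensionality => x; rewrite /= /hom_scale (tact_nat _ _ _ im).
- by move=> f g _ _; apply: functional_extensionality => x; rewrite /= /hom_add (slD psl).
- by move=> a f _; apply: functional_extensionality => x; rewrite /= /hom_scale (tact_nat _ _ _ pm).
- move=> h1 h2 hm1 hm2.
  rewrite !(delta_cov_Cls iota0 hK SE) //; last exact: morph_hom_add.
  rewrite (add_Cls iota0 hK); try exact: (slin_comp phisl (proj1 (proj1 (morphP _) _))).
  by congr Cls; apply: functional_extensionality => c; rewrite /hom_add (slD phisl).
- move=> a h hm.
  have hs : slin (fun c => cocy SE (h c)) := slin_comp phisl (m2s hm).
  rewrite !(delta_cov_Cls iota0 hK SE) //; last exact: morph_hom_scale.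
  rewrite (scale_Cls iota0 hK _ hs); apply: Cls_eq.
  apply: (Bc_ext _ (Bc_tact iota0 a hs)) => c.
  by rewrite /hom_scale (tact_nat _ _ _ hm).
- move=> C1 C2 /(class_iff iota0 hK) [p1 [h1 ->]] /(class_iff iota0 hK) [p2 [h2 ->]].
  rewrite (add_Cls iota0 hK h1 h2) !(push_Cls iota0 hK im) //; last exact: slin_add.
  rewrite (add_Cls iota0 hK (slin_comp isl h1) (slin_comp isl h2)).
  by congr Cls; apply: functional_extensionality => c; rewrite (slD isl).
- move=> a C /(class_iff iota0 hK) [p1 [h1 ->]].
  rewrite (scale_Cls iota0 hK _ h1) !(push_Cls iota0 hK im) //; last first.
    exact: (slin_comp (m2s (tact_morph iota0 _ a)) h1).
  rewrite (scale_Cls iota0 hK _ (slin_comp isl h1)).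
  by congr Cls; apply: functional_extensionality => c; rewrite (tact_nat _ _ _ im).
- move=> C1 C2 /(class_iff iota0 hK) [p1 [h1 ->]] /(class_iff iota0 hK) [p2 [h2 ->]].
  rewrite (add_Cls iota0 hK h1 h2) !(push_Cls iota0 hK pm) //; last exact: slin_add.
  rewrite (add_Cls iota0 hK (slin_comp psl h1) (slin_comp psl h2)).
  by congr Cls; apply: functional_extensionality => c; rewrite (slD psl).
- move=> a C /(class_iff iota0 hK) [p1 [h1 ->]].
  rewrite (scale_Cls iota0 hK _ h1) !(push_Cls iota0 hK pm) //; last first.
    exact: (slin_comp (m2s (tact_morph iota0 _ a)) h1).
  rewrite (scale_Cls iota0 hK _ (slin_comp psl h1)).
  by congr Cls; apply: functional_extensionality => c; rewrite (tact_nat _ _ _ pm).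
- move=> f g _ _ hfg; apply: functional_extensionality => x.
  apply: (ei_inj (e:=E)); exact: (equal_f hfg x).
- move=> g hg; have gt := (proj1 (morphP g) hg).2; split.
  + move=> h0; have hg0 x : ext_p E (g x) = 0 := equal_f h0 x.
    exists (fun x => sp_r SE (g x)); split.
      apply/morphP; split; first exact: (slin_comp (sp_r_sl SE) (m2s hg)).
      by move=> x; rewrite gt sp_rt hg0 (sl0 phisl) addr0.
    apply: functional_extensionality => x /=.
    by rewrite {1}(sp_dec SE (g x)) hg0 (sl0 (sp_s_sl SE)) addr0.
  + by case=> f [hf ->]; apply: functional_extensionality => x /=; exact: ep_i.
- move=> h hm; have hs := slin_comp phisl (m2s hm); have ht := (proj1 (morphP h) hm).2.
  rewrite (delta_cov_Cls iota0 hK SE hm) (zero_Cls iota0 hK hs); split.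
  + case=> f [hf hfe]; exists (fun c => sp_s SE (h c) - ext_i E (f c)); split.
      apply/morphP; split.
        exact: (slin_sub (slin_comp (sp_s_sl SE) (m2s hm)) (slin_comp isl hf)).
      move=> c; move: (hfe c) => /= hc.
      by rewrite ht (slB (slin_t _)) sp_ts -ei_t hc (slB isl) zh.
    by apply: functional_extensionality => c /=; rewrite (slB psl) sp_ps ep_i subr0.
  + case=> g [hg E0]; subst h; have gt := (proj1 (morphP g) hg).2.
    exists (fun c => - sp_r SE (g c)); split.
      exact: (slin_opp (slin_comp (sp_r_sl SE) (m2s hg))).
    move=> c /=; have E1 : sp_r SE (g (dtm_t c)) = dtm_t (sp_r SE (g c)) + cocy SE (ext_p E (g c)).
      by rewrite gt sp_rt.
    by rewrite (slN (slin_t M1)) opprK E1 addKr.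
- move=> C /(class_iff iota0 hK) [psi [hpsi ->]].
  rewrite (push_Cls iota0 hK im hpsi) (zero_Cls iota0 hK (slin_comp isl hpsi)); split.
  + case=> F [hF hFe].
    have ht c : ext_p E (F (dtm_t c)) = dtm_t (ext_p E (F c)).
      move: (hFe c) => /= /(congr1 (ext_p E)); rewrite ep_i (slB psl) ep_t.
      by move=> /esym /eqP; rewrite subr_eq0 => /eqP ->.
    have hm : is_morph (fun c => ext_p E (F c)).
      by apply/morphP; split; [exact: (slin_comp psl hF) | exact: ht].
    exists (fun c => ext_p E (F c)); split => //.
    rewrite (delta_cov_Cls iota0 hK SE hm).
    apply: Cls_eq; exists (fun c => sp_r SE (F c)); split.
      exact: (slin_comp (sp_r_sl SE) hF).
    move=> c; have E1 : psi c = dtm_t (sp_r SE (F c)) + cocy SE (ext_p E (F c))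
                                 - sp_r SE (F (dtm_t c)).
      move: (hFe c) => /= hc.
      by rewrite -(sp_ri SE (psi c)) hc (slB (sp_r_sl SE)) sp_rt.
    by rewrite E1 addrAC addrK.
  + case=> h [hm]; rewrite (delta_cov_Cls iota0 hK SE hm) => hC.
    have hB := Cls_inj hpsi hC; have ht := (proj1 (morphP h) hm).2.
    have hB2 : Bc (fun c => ext_i E (cocy SE (h c))).
      exists (fun c => sp_s SE (h c)); split; first exact: (slin_comp (sp_s_sl SE) (m2s hm)).
      by move=> c; rewrite ht sp_ts addrK.
    apply: (Bc_ext _ (BcD (Bc_compl im hB) hB2)) => c.
    by rewrite -(slD isl) subrK.
- move=> C /(class_iff iota0 hK) [psi [hpsi ->]].
  rewrite (push_Cls iota0 hK pm hpsi) (zero_Cls iota0 hK (slin_comp psl hpsi)); split.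
  + case=> F [hF hFe].
    pose chi := fun c => psi c - (dtm_t (sp_s SE (F c)) - sp_s SE (F (dtm_t c))).
    have hchi : slin chi.
      apply: (slin_sub hpsi); apply: slin_sub.
        exact: (slin_comp (slin_t _) (slin_comp (sp_s_sl SE) hF)).
      exact: (slin_comp (sp_s_sl SE) (slin_comp hF (slin_t _))).
    have pchi c : ext_p E (chi c) = 0.
      move: (hFe c) => /= hc.
      by rewrite /chi (slB psl) (slB psl) ep_t !sp_ps hc subrr.
    have hr := slin_comp (sp_r_sl SE) hchi.
    exists (Cls (fun c => sp_r SE (chi c))); split.
      by apply/(class_iff iota0 hK); exists (fun c => sp_r SE (chi c)); split.
    rewrite (push_Cls iota0 hK im hr); apply: Cls_eq.
    exists (fun c => sp_s SE (F c)); split; first exact: (slin_comp (sp_s_sl SE) hF).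
    move=> c /=.
    have ir : ext_i E (sp_r SE (chi c)) = chi c.
      by rewrite {2}(sp_dec SE (chi c)) pchi (sl0 (sp_s_sl SE)) addr0.
    by rewrite ir /chi opprB addrC subrK.
  + case=> C' [/(class_iff iota0 hK) [psi' [hpsi' ->]]].
    rewrite (push_Cls iota0 hK im hpsi') => hC; have hB := Cls_inj hpsi hC.
    by apply: (Bc_ext _ (Bc_compl pm hB)) => c /=; rewrite (slB psl) ep_i subr0.
- move=> C /(class_iff iota0 hK) [psi [hpsi ->]].
  have hs := slin_comp (sp_s_sl SE) hpsi.
  exists (Cls (fun c => sp_s SE (psi c))); split.
    by apply/(class_iff iota0 hK); exists (fun c => sp_s SE (psi c)); split.
  rewrite (push_Cls iota0 hK pm hs).
  by congr Cls; apply: functional_extensionality => c; rewrite sp_ps.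
Qed.

Lemma aux1 (V : zmodType) (a b c : V) : a - b + (c + b - c) = a.
Proof. by rewrite [c + b]addrC addrK subrK. Qed.

Lemma contra_part (M1 M2 : DT) (E : ext M2 M1) (N : DT) : long_exact_contra iota0 E N.
Proof.
case: (split_ex iota0 hK E) => SE.
have im := ext_i_morph E; have pm := ext_p_morph E.
have isl := ei_sl E; have psl := ep_sl E.
have phisl := cocy_sl SE.
rewrite /long_exact_contra; cbv zeta.
repeat match goal with |- _ /\ _ => split end.
- by [].
- by [].
- by [].
- by [].
- move=> k1 k2 hk1 hk2.
  rewrite !(delta_contra_Cls iota0 hK SE) //; last exact: morph_hom_add.
  by rewrite (add_Cls iota0 hK (slin_comp (m2s hk1) phisl) (slin_comp (m2s hk2) phisl)).
- move=> a k hk.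
  rewrite !(delta_contra_Cls iota0 hK SE) //; last exact: morph_hom_scale.
  by rewrite (scale_Cls iota0 hK _ (slin_comp (m2s hk) phisl)).
- move=> C1 C2 /(class_iff iota0 hK) [p1 [h1 ->]] /(class_iff iota0 hK) [p2 [h2 ->]].
  rewrite (add_Cls iota0 hK h1 h2) !(pull_Cls iota0 hK pm) //; last exact: slin_add.
  by rewrite (add_Cls iota0 hK (slin_comp h1 psl) (slin_comp h2 psl)).
- move=> a C /(class_iff iota0 hK) [p1 [h1 ->]].
  rewrite (scale_Cls iota0 hK _ h1) !(pull_Cls iota0 hK pm) //; last first.
    exact: (slin_comp (m2s (tact_morph iota0 _ a)) h1).
  by rewrite (scale_Cls iota0 hK _ (slin_comp h1 psl)).
- move=> C1 C2 /(class_iff iota0 hK) [p1 [h1 ->]] /(class_iff iota0 hK) [p2 [h2 ->]].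
  rewrite (add_Cls iota0 hK h1 h2) !(pull_Cls iota0 hK im) //; last exact: slin_add.
  by rewrite (add_Cls iota0 hK (slin_comp h1 isl) (slin_comp h2 isl)).
- move=> a C /(class_iff iota0 hK) [p1 [h1 ->]].
  rewrite (scale_Cls iota0 hK _ h1) !(pull_Cls iota0 hK im) //; last first.
    exact: (slin_comp (m2s (tact_morph iota0 _ a)) h1).
  by rewrite (scale_Cls iota0 hK _ (slin_comp h1 isl)).
- move=> f g _ _ hfg; apply: functional_extensionality => y.
  by case: (ext_p_surj E y) => x <-; exact: (equal_f hfg x).
- move=> g hg; have gt := (proj1 (morphP g) hg).2; split.
  + move=> h0; have hg0 a : g (ext_i E a) = 0 := equal_f h0 a.
    exists (fun c => g (sp_s SE c)); split.
      apply/morphP; split; first exact: (slin_comp (m2s hg) (sp_s_sl SE)).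
      by move=> c; rewrite -gt sp_ts (slD (m2s hg)) hg0 add0r.
    apply: functional_extensionality => x /=.
    by rewrite {1}(sp_dec SE x) (slD (m2s hg)) hg0 add0r.
  + by case=> f [hf ->]; apply: functional_extensionality => a /=; rewrite ep_i (sl0 (m2s hf)).
- move=> k hk; have hks := slin_comp (m2s hk) phisl; have kt := (proj1 (morphP k) hk).2.
  rewrite (delta_contra_Cls iota0 hK SE hk) (zero_Cls iota0 hK hks); split.
  + case=> F [hF hFe].
    have hF' c : k (cocy SE c) + F (dtm_t c) = dtm_t (F c).
      by move: (hFe c) => /= ->; rewrite subrK.
    exists (fun x => k (sp_r SE x) + F (ext_p E x)); split.
      apply/morphP; split.
        exact: (slin_add (slin_comp (m2s hk) (sp_r_sl SE)) (slin_comp hF psl)).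
      by move=> x; rewrite sp_rt ep_t (slD (m2s hk)) kt -addrA hF' tD.
    by apply: functional_extensionality => a /=; rewrite sp_ri ep_i (sl0 hF) addr0.
  + case=> g [hg ->]; have gt := (proj1 (morphP g) hg).2.
    exists (fun c => g (sp_s SE c)); split; first exact: (slin_comp (m2s hg) (sp_s_sl SE)).
    by move=> c /=; rewrite -gt -(slB (m2s hg)) sp_ts addrK.
- move=> C /(class_iff iota0 hK) [psi [hpsi ->]].
  rewrite (pull_Cls iota0 hK pm hpsi) (zero_Cls iota0 hK (slin_comp hpsi psl)); split.
  + case=> F [hF hFe].
    have hk : is_morph (fun a => - F (ext_i E a)).
      apply/morphP; split; first exact: (slin_opp (slin_comp hF isl)).
      move=> a; move: (hFe (ext_i E a)) => /=; rewrite ep_i (sl0 hpsi).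
      move=> /esym /eqP; rewrite subr_eq0 => /eqP h0.
      by rewrite ei_t (slN (slin_t N)) h0.
    exists (fun a => - F (ext_i E a)); split => //.
    rewrite (delta_contra_Cls iota0 hK SE hk); apply: Cls_eq.
    exists (fun c => F (sp_s SE c)); split; first exact: (slin_comp hF (sp_s_sl SE)).
    move=> c /=.
    have E1 : psi c = dtm_t (F (sp_s SE c)) - F (ext_i E (cocy SE c)) - F (sp_s SE (dtm_t c)).
      rewrite -{1}(sp_ps SE c); move: (hFe (sp_s SE c)) => /= ->.
      by rewrite sp_ts (slD hF) opprD addrA.
    by rewrite E1 opprK addrAC subrK.
  + case=> k [hk]; rewrite (delta_contra_Cls iota0 hK SE hk) => hC.
    have hB := Cls_inj hpsi hC; have kt := (proj1 (morphP k) hk).2.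
    apply: (Bc_ext _ (BcD (Bc_compr pm hB) (Bc_comm (slin_comp (m2s hk) (sp_r_sl SE))))).
    by move=> x /=; rewrite sp_rt (slD (m2s hk)) kt aux1.
- move=> C /(class_iff iota0 hK) [psi [hpsi ->]].
  rewrite (pull_Cls iota0 hK im hpsi) (zero_Cls iota0 hK (slin_comp hpsi isl)); split.
  + case=> F [hF hFe].
    pose chi := fun x => psi x - (dtm_t (F (sp_r SE x)) - F (sp_r SE (dtm_t x))).
    have hchi : slin chi.
      apply: (slin_sub hpsi); apply: slin_sub.
        exact: (slin_comp (slin_t _) (slin_comp hF (sp_r_sl SE))).
      exact: (slin_comp hF (slin_comp (sp_r_sl SE) (slin_t _))).
    have chii a : chi (ext_i E a) = 0.
      move: (hFe a) => /= hc.
      by rewrite /chi sp_ri -ei_t sp_ri hc subrr.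
    have chisp x : chi (sp_s SE (ext_p E x)) = chi x.
      by rewrite {2}(sp_dec SE x) (slD hchi) chii add0r.
    have hcs := slin_comp hchi (sp_s_sl SE).
    exists (Cls (fun c => chi (sp_s SE c))); split.
      by apply/(class_iff iota0 hK); exists (fun c => chi (sp_s SE c)); split.
    rewrite (pull_Cls iota0 hK pm hcs); apply: Cls_eq.
    exists (fun x => F (sp_r SE x)); split; first exact: (slin_comp hF (sp_r_sl SE)).
    by move=> x /=; rewrite chisp /chi opprB addrC subrK.
  + case=> C' [/(class_iff iota0 hK) [psi' [hpsi' ->]]].
    rewrite (pull_Cls iota0 hK pm hpsi') => hC; have hB := Cls_inj hpsi hC.
    by apply: (Bc_ext _ (Bc_compr im hB)) => a /=; rewrite ep_i (sl0 hpsi') subr0.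
- move=> C /(class_iff iota0 hK) [psi [hpsi ->]].
  have hs := slin_comp hpsi (sp_r_sl SE).
  exists (Cls (fun x => psi (sp_r SE x))); split.
    by apply/(class_iff iota0 hK); exists (fun x => psi (sp_r SE x)); split.
  rewrite (pull_Cls iota0 hK im hs).
  by congr Cls; apply: functional_extensionality => c /=; rewrite sp_ri.
Qed.
End Main.


Theorem theorem11p5 (Fq : finFieldType) (K : fieldType)
    (iota0 : {rmorphism Fq -> K}) (theta : K) (hK : perfect K)
    (M1 M2 : dtm Fq theta) (E : ext M2 M1) (N : dtm Fq theta) :
  long_exact_cov iota0 E N /\ long_exact_contra iota0 E N.
Proof.
split; [exact: (@cov_part Fq K iota0 theta hK M1 M2 E N) |
        exact: (@contra_part Fq K iota0 theta hK M1 M2 E N)].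
Qed.
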